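(* Fix $n\ge 2$. For any $\epsilon>0$ and any tuple $(\mu_1,\dots,\mu_{n-2})\in\mathbb{R}^{n-2}$, there exists a matrix $A\in SL(n,\mathbb{Z})$ which is diagonalizable over $\mathbb{R}$ (so all its eigenvalues are real) such that its eigenvalues $\lambda_1,\dots,\lambda_n$ can be ordered so that (1) $|\lambda_i-\mu_i|<\epsilon$ for $1\le i\le n-2$; (2) $|\lambda_{n-1}|>1/\epsilon$ and $|\lambda_n|<\epsilon$. *)

(* Defs.v *)
From HB Require Import structures.
From mathcomp Require Import all_boot all_order all_algebra.
Set Implicit Arguments. Unset Strict Implicit. Unset Printing Implicit Defensive.
Import Order.TTheory GRing.Theory Num.Theory.
Local Open Scope ring_scope.

Definition diag_with_eigenvalues (R : numFieldType) (n : nat)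
    (A : 'M[int]_n) (lam : 'rV[R]_n) : Prop :=
  exists P : 'M[R]_n,
    P \in unitmx /\ map_mx (fun z : int => z%:~R) A = invmx P *m diag_mx lam *m P.

(* Main.v *)
Require Import Defs.
From HB Require Import structures.
From mathcomp Require Import all_boot all_order all_algebra polyrcf.
From mathcomp Require Import ring lra zify.
Import Order.TTheory GRing.Theory Num.Theory.
Local Open Scope ring_scope.

Definition compmx m (q : {poly int}) : 'M[int]_(m.+2) :=
  \matrix_(i, j) if i == ord_max then - q`_j else ((i.+1 == j :> nat)%:R).

Lemma det_compmx m (q : {poly int}) : q`_0 = (-1)^+m -> \det (compmx m q) = 1.
Proof.
move=> hq; rewrite (expand_det_col _ ord0) (bigD1 ord_max) //= big1 ?addr0.
  rewrite /cofactor !mxE eqxx hq.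
  have -> : row' ord_max (col' ord0 (compmx m q)) = 1%:M.
    apply/matrixP => i j; rewrite !mxE /=.
    have -> : (lift ord_max i == ord_max) = false.
      by apply/negbTE; rewrite eq_sym neq_lift.
    by rewrite /bump /= ltnNge -ltnS ltn_ord add0n add1n eqSS.
  rewrite det_scalar expr1n mulr1 addn0 /= exprS mulN1r mulrNN -expr2 -exprM mulnC exprM sqrrN !expr1n //.
move=> i /negbTE hi; rewrite !mxE hi /= mul0r //.
Qed.

Lemma diag_compmx (R : fieldType) m (q : {poly int}) (lam : 'rV[R]_(m.+2)) :
  (size q <= m.+2)%N ->
  (forall i, lam 0 i ^+ m.+2 + (map_poly (fun z : int => z%:~R) q).[lam 0 i] = 0) ->
  (forall i j : 'I_(m.+2), i != j -> lam 0 i != lam 0 j) ->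
  exists P : 'M[R]_(m.+2),
    P \in unitmx /\ map_mx (fun z : int => z%:~R) (compmx m q) = invmx P *m diag_mx lam *m P.
Proof.
move=> hs hroot hdist.
set V := Vandermonde m.+2 lam.
have hV : V \in unitmx.
  rewrite unitmxE unitfE det_Vandermonde.
  apply/prodf_neq0 => i _; apply/prodf_neq0 => j hij.
  by rewrite subr_eq0 eq_sym hdist // -val_eqE /= neq_ltn hij.
have key : map_mx (fun z : int => z%:~R) (compmx m q) *m V = V *m diag_mx lam.
  apply/matrixP => i k; rewrite mul_mx_diag !mxE.
  have [->|hi] := eqVneq i ord_max.
    under eq_bigr => j _ do rewrite !mxE eqxx.
    have := hroot k.
    rewrite (horner_coef_wide _ (n := m.+2)); last by rewrite /map_poly (leq_trans (size_poly _ _)).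
    move/eqP; rewrite addr_eq0 => /eqP h; rewrite /= -exprSr h.
    rewrite -sumrN; apply: eq_bigr => j _.
    by rewrite coef_map /= mulrNz mulNr.
  have hi0 : (i : nat) != m.+1 by apply: contra hi => /eqP h; apply/eqP/val_inj.
  have hi1 : (i.+1 < m.+2)%N by rewrite ltnS ltn_neqAle hi0 -ltnS ltn_ord.
  rewrite (bigD1 (Ordinal hi1)) //= big1 ?addr0.
    by rewrite !mxE (negbTE hi) /= eqxx mul1r exprS mulrC.
  move=> j hj; rewrite !mxE (negbTE hi) /=.
  have -> : (i.+1 == j :> nat) = false.
    by apply/negbTE; apply: contra hj => /eqP h; apply/eqP/val_inj.
  by rewrite mul0r.
exists (invmx V); split; first by rewrite unitmx_inv.
by rewrite invmxK -key mulmxK.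
Qed.
Lemma size_g (d : int) (k : nat -> int) n :
  (size (\prod_(j < n) (d%:P * 'X - (k j)%:P))%R <= n.+1)%N.
Proof.
elim: n => [|n IH]; first by rewrite big_ord0 size_poly1.
rewrite big_ord_recr /=; apply: leq_trans (size_polyMleq _ _) _.
  have hf : (size ((d%:P * 'X - (k n)%:P)%R) <= 2)%N.
  rewrite -polyCN size_MXaddC; case: ifP => // _.
  by rewrite ltnS size_polyC leq_b1.
have := leq_add IH hf; case: (size _ + size _)%N => //= x; by rewrite addnS ltnS addn1.
Qed.

Lemma sign_lem (R : realDomainType) (ha hb ga gb M : R) :
  ga * gb < 0 -> `|ha| < M * `|ga| -> `|hb| < M * `|gb| ->
  (ha - M * ga) * (hb - M * gb) < 0.
Proof.
move=> hg h1 h2.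
have ha1 : ha <= `|ha| := ler_norm ha.
have ha2 : - ha <= `|ha| by rewrite -normrN ler_norm.
have hb1 : hb <= `|hb| := ler_norm hb.
have hb2 : - hb <= `|hb| by rewrite -normrN ler_norm.
have [ga0|ga0|ga0] := ltrgtP ga 0.
- have gb0 : 0 < gb by move: hg; rewrite nmulr_rlt0.
  move: h1 h2; rewrite (ltr0_norm ga0) (gtr0_norm gb0) => h1 h2.
  rewrite pmulr_rlt0; lra.
- have gb0 : gb < 0 by move: hg; rewrite pmulr_rlt0.
  move: h1 h2; rewrite (ltr0_norm gb0) (gtr0_norm ga0) => h1 h2.
  rewrite nmulr_rlt0; lra.
- by move: hg; rewrite ga0 mul0r ltxx.
Qed.

Lemma prod_sign (R : realFieldType) n (e : nat -> R) j : (j < n)%N -> e j = 0 ->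
  (forall i, (i < n)%N -> i != j -> 1 <= e i ^+ 2) ->
  \prod_(i < n) ((e i - 4^-1) * (e i + 4^-1)) < 0.
Proof.
move=> hj hej hi.
rewrite (bigD1 (Ordinal hj)) //= hej.
have h4 : (0 : R) < 4^-1 by rewrite invr_gt0; lra.
rewrite nmulr_rlt0; first by apply: prodr_gt0 => i hij; have := hi i (ltn_ord i);
  rewrite -(inj_eq val_inj) /= in hij; move=> /(_ hij) h; nra.
nra.
Qed.

Lemma aux_int (N w c : int) : 0 < N -> - N < c -> c < N -> N * w = c -> c = 0.
Proof.
move=> hN h1 h2 he.
have [hw|hw|hw] := ltrgtP w 0.
- have : N * w <= - N by nia.
  lia.
- have : N <= N * w by nia.
  lia.
- by rewrite -he hw mulr0.
Qed.

Lemma kk_inj (m : nat) (z : nat -> int) i i' : (i <= m)%N -> (i' <= m)%N -> i != i' ->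
  (if (i < m)%N then (m.+2)%:Z * z i + (i.+1)%:Z else 0) !=
  (if (i' < m)%N then (m.+2)%:Z * z i' + (i'.+1)%:Z else 0).
Proof.
move=> hi hi' hne; apply/eqP.
case: ltnP => h1; case: ltnP => h2; try lia.
- move=> he; have := aux_int (m.+2)%:Z (z i - z i') (i'%:Z - i%:Z).
  lia.
- move=> he; have := aux_int (m.+2)%:Z (z i) (- (i.+1)%:Z). lia.
- move=> he; have := aux_int (m.+2)%:Z (z i') (- (i'.+1)%:Z). lia.
Qed.

Lemma idx_inj (m p p' : nat) : (p < m.+2)%N -> (p' < m.+2)%N -> p != m -> p' != m ->
  p != p' -> (if (p < m)%N then p else m) != (if (p' < m)%N then p' else m).
Proof. move=> *; case: (ltnP p m) => h1; case: (ltnP p' m) => h2; lia. Qed.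

Theorem mainTheorem6 (R : archiRcfType) (m : nat) (eps : R) (heps : 0 < eps)
    (mu : 'I_m -> R) :
  exists A : 'M[int]_(m.+2),
    \det A = 1 /\
    exists lam : 'rV[R]_(m.+2),
      diag_with_eigenvalues A lam /\
      (forall i : 'I_m, `|lam 0 (inord i) - mu i| < eps) /\
      eps^-1 < `|lam 0 (inord m)| /\
      `|lam 0 (inord m.+1)| < eps.
Proof.
pose D : nat := Num.Def.archi_bound (3 / eps).
have h3 : 0 < 3 / eps by apply: divr_gt0 => //; lra.
have hD : 3 / eps < D%:R by apply: archi_boundP; exact: ltW.
have hD0 : (0 : R) < D%:R by apply: lt_trans hD.
have hDe : 3 / D%:R < eps.
  by rewrite ltr_pdivrMr // mulrC -ltr_pdivrMr.
pose d : nat := (m.+2 * D)%N.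
have hd : (0 : R) < d%:R by rewrite /d natrM mulr_gt0 //; lra.
pose mu' (i : nat) : R := if (insub i : option 'I_m) is Some j then mu j else 0.
pose z (i : nat) : int := Num.floor (mu' i * D%:R).
pose kk (i : nat) : int := if (i < m)%N then (m.+2)%:Z * z i + (i.+1)%:Z else 0.
pose r (i : nat) : R := (kk i)%:~R / d%:R.
pose del : R := (4 * d%:R)^-1.
have hdel : 0 < del by rewrite invr_gt0; lra.
pose G (x : R) : R := \prod_(j < m.+1) (d%:R * x - (kk j)%:~R).
pose s : int := (-1) ^+ m.
pose h (x : R) : R := x ^+ m.+2 + s%:~R.
pose t : R := eps^-1 + \sum_(j < m.+1) `|r j| + 1.
pose B : R := \sum_(j < m.+1) (`|h (r j - del)| / `|G (r j - del)|
                  + `|h (r j + del)| / `|G (r j + del)|) + `|h t| / `|G t|.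
pose M : nat := Num.Def.archi_bound B.
pose g : {poly int} := \prod_(j < m.+1) ((d%:Z)%:P * 'X - (kk j)%:P).
pose q : {poly int} := s%:P - (M%:Z)%:P * g.
pose F : {poly R} := map_poly (intr : int -> R) ('X^(m.+2) + q).
have hq : (size q <= m.+2)%N.
  apply: leq_trans (size_polyD _ _) _; rewrite size_polyN geq_max.
  apply/andP; split; first by apply: leq_trans (size_polyC_leq1 _) _.
  apply: leq_trans (size_polyMleq _ _) _.
  have := size_polyC_leq1 (M%:Z); have := size_g (d%:Z) kk m.+1.
  case: (size (M%:Z)%:P) => [|[|k]] //= h1 _.
  by rewrite add0n; apply: leq_trans (leq_pred _) h1.
have hq0 : q`_0 = s.
  rewrite /q coefB coefC coefCM /= -horner_coef0 /g horner_prod big_ord_recr /=.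
  by rewrite !hornerE /kk ltnn /= oppr0 !mulr0 subr0.
have hF : forall x, F.[x] = h x - M%:R * G x.
  have mC : forall c : int, map_poly (intr : int -> R) c%:P = (c%:~R)%:P.
    by move=> c; rewrite (map_polyC (intr : {additive int -> R})).
  move=> x; rewrite /F /q rmorphD /= map_polyXn rmorphB /= mC rmorphM /= mC.
  rewrite hornerD hornerXn hornerD hornerN hornerC hornerM hornerC addrA.
  rewrite /h /G /g rmorph_prod /= horner_prod; congr (_ - _ * _).
  apply: eq_bigr => j _; rewrite rmorphB /= rmorphM /= mC mC map_polyX.
  by rewrite hornerD hornerN hornerC hornerM hornerC hornerX.
have hkd : forall j, d%:R * r j = (kk j)%:~R.
  by move=> j; rewrite /r mulrC divfK // gt_eqF.
have hkk : forall j j', (j <= m)%N -> (j' <= m)%N -> j != j' -> kk j != kk j'.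
  by move=> j j' hj hj' hjj; apply: kk_inj.
have hsq : forall j j', (j <= m)%N -> (j' <= m)%N -> j != j' ->
    1 <= ((kk j - kk j')%:~R : R) ^+ 2.
  move=> j j' hj hj' hjj; rewrite -rmorphXn /= ler1z.
  have := hkk j j' hj hj' hjj; rewrite -subr_eq0 expr2.
  move: (kk j - kk j') => w hw; nia.
have hdd : d%:R * del = 4^-1 by rewrite /del; field; lra.
have hGab : forall j : 'I_(m.+1), G (r j - del) * G (r j + del) < 0.
  move=> j; rewrite /G -big_split /=.
  pose e (i : nat) : R := (kk j - kk i)%:~R.
  rewrite (eq_bigr (fun i : 'I_(m.+1) => ((e i - 4^-1) * (e i + 4^-1)))); last first.
    by move=> i _; rewrite /e rmorphB /= -(hkd j) -hdd; ring.
  apply: (@prod_sign R m.+1 e j (ltn_ord j)); first by rewrite /e subrr.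
  move=> i hi hij; apply: hsq => //; first by rewrite -ltnS.
  by rewrite eq_sym.
have hsum : forall j : 'I_(m.+1), `|r j| <= \sum_(i < m.+1) `|r i|.
  by move=> j; rewrite (bigD1 j) //= lerDl sumr_ge0.
have hepsi : 0 < eps^-1 by rewrite invr_gt0.
have hrt : forall j : 'I_(m.+1), r j + 1 <= t.
  move=> j; have := hsum j; have := ler_norm (r j); rewrite /t; lra.
have hGt : 0 < G t.
  apply: prodr_gt0 => j _; rewrite -hkd -mulrBr mulr_gt0 // subr_gt0.
  have := hrt j; lra.
have hTj : forall j : 'I_(m.+1), 0 <= `|h (r j - del)| / `|G (r j - del)|
                  + `|h (r j + del)| / `|G (r j + del)|.
  by move=> j; apply: addr_ge0; apply: divr_ge0.
have hSj : forall j : 'I_(m.+1), `|h (r j - del)| / `|G (r j - del)|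
                  + `|h (r j + del)| / `|G (r j + del)| <= B.
  move=> j; rewrite /B (bigD1 j) //= -addrA lerDl; apply: addr_ge0.
    by apply: sumr_ge0 => i _; apply: hTj.
  by apply: divr_ge0.
have hB0 : 0 <= B by apply: le_trans (hSj ord0); apply: hTj.
have hMB : B < M%:R by apply: archi_boundP.
have hlt : forall x, G x != 0 -> `|h x| / `|G x| <= B -> `|h x| < M%:R * `|G x|.
  move=> x hG hx; rewrite -ltr_pdivrMr ?normr_gt0 //.
  exact: le_lt_trans hx hMB.
have hGa : forall j : 'I_(m.+1), G (r j - del) != 0.
  by move=> j; apply: contraTneq (hGab j) => ->; rewrite mul0r ltxx.
have hGb : forall j : 'I_(m.+1), G (r j + del) != 0.
  by move=> j; apply: contraTneq (hGab j) => ->; rewrite mulr0 ltxx.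
have hFab : forall j : 'I_(m.+1), F.[r j - del] * F.[r j + del] < 0.
  move=> j; rewrite !hF; apply: sign_lem (hGab j) (hlt _ (hGa j) _) (hlt _ (hGb j) _).
    apply: le_trans (hSj j); rewrite lerDl; apply: divr_ge0 => //.
  apply: le_trans (hSj j); rewrite lerDr; apply: divr_ge0 => //.
have hFt : F.[t] < 0.
  have H2 : `|h t| / `|G t| <= B by rewrite /B lerDr; apply: sumr_ge0 => i _; apply: hTj.
  rewrite hF; have := hlt t (lt0r_neq0 hGt) H2.
  rewrite (gtr0_norm hGt); have := ler_norm (h t); lra.
have hlf : lead_coef ('X^(m.+2) + q) = 1.
  by rewrite lead_coefDl ?lead_coefXn // size_polyXn ltnS.
have hlead : lead_coef F = 1.
  by rewrite /F lead_coef_map_eq hlf ?rmorph1 ?oner_neq0.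
have hl0 : 0 < lead_coef F by rewrite hlead ltr01.
have [n0 hn0] := poly_pinfty_gt_lc hl0.
pose T := Num.max n0 (t + 1).
have hFT : 0 < F.[T].
  have hT : n0 <= T by rewrite le_max lexx.
  have := hn0 T hT; rewrite hlead; lra.
have htT : t <= T by rewrite le_max; apply/orP; right; lra.
have hFtT : F.[t] * F.[T] < 0 by rewrite pmulr_llt0.
have [rb hrb hrootb] := poly_ivtoo htT hFtT.
have hrbt : t < rb by move: hrb; rewrite in_itv /= => /andP[].
have hle : forall j : 'I_(m.+1), r j - del <= r j + del by move=> j; lra.
have [rho hrho] : {rho : 'I_(m.+1) -> R | forall j : 'I_(m.+1),
    r j - del < rho j < r j + del /\ root F (rho j)}.
  exists (fun j => s2val (poly_ivtoo (hle j) (hFab j))) => j.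
  case: (poly_ivtoo (hle j) (hFab j)) => x hx hr.
  have := hx; rewrite in_itv /= => hx'.
  by split; [exact: hx' | exact: hr].
have hd1 : (1 : R) <= d%:R by rewrite ler1n -(ltr0n R).
have hdel1 : del <= 4^-1.
  rewrite /del lef_pV2 ?posrE; lra.
have hjm : forall j : 'I_(m.+1), (j <= m)%N by move=> j; rewrite -ltnS.
have hrho_ne : forall j j' : 'I_(m.+1), j != j' -> rho j != rho j'.
  move=> j j' hjj; apply/eqP => he.
  have hjj' : (j : nat) != j' by [].
  have h1 := hsq j j' (hjm j) (hjm j') hjj'.
  rewrite rmorphB /= -(hkd j) -(hkd j') in h1.
  have [/andP[a1 a2] _] := hrho j; have [/andP[b1 b2] _] := hrho j'.
  rewrite he in a1 a2.
  have c1 : d%:R * (r j - r j') < 2^-1 by nra.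
  have c2 : - 2^-1 < d%:R * (r j - r j') by nra.
  nra.
have hrho_b : forall j : 'I_(m.+1), rho j < rb.
  move=> j; have [/andP[a1 a2] _] := hrho j; have := hrt j; lra.
pose lamf (p : nat) : R :=
  if (p < m)%N then rho (inord p) else if p == m then rb else rho (inord m).
pose lam : 'rV[R]_(m.+2) := \row_(p < m.+2) lamf p.
have hlam : forall p : 'I_(m.+2), lam 0 p = lamf p by move=> p; rewrite mxE.
have hcase : forall p : 'I_(m.+2), ((p : nat) = m /\ lamf p = rb) \/
    ((p : nat) != m /\ exists j : 'I_(m.+1), lamf p = rho j /\
        (j : nat) = (if (p < m)%N then (p : nat) else m)).
  move=> p; rewrite /lamf; case: ltnP => hp.
    right; split; first by rewrite ltn_eqF.
    by exists (inord p); split => //; rewrite inordK // ltnS ltnW.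
  case: eqP => hpm; first by left.
  right; split; first by apply/eqP.
  by exists (inord m); split => //; rewrite inordK.
have hroot : forall p : 'I_(m.+2), root F (lamf p).
  move=> p; case: (hcase p) => [[_ ->] //|[_ [j [-> _]]]].
  by case: (hrho j).
have hdist : forall p p' : 'I_(m.+2), p != p' -> lamf p != lamf p'.
  move=> p p' hpp.
  case: (hcase p) => [[hp ->]|[hp [j [-> hj]]]];
  case: (hcase p') => [[hp' ->]|[hp' [j' [-> hj']]]].
  - by move: hpp; rewrite -(inj_eq val_inj) /= hp hp' eqxx.
  - by rewrite eq_sym lt_eqF.
  - by rewrite lt_eqF.
  - apply: hrho_ne; rewrite -(inj_eq val_inj) /= hj hj'.
    by apply: idx_inj.
have hFq : forall x, F.[x] = x ^+ m.+2 + (map_poly (intr : int -> R) q).[x].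
  by move=> x; rewrite /F rmorphD /= map_polyXn hornerD hornerXn.
exists (compmx m q); split; first by apply: det_compmx.
exists lam; split.
  apply: diag_compmx => // [i|i j hij]; first by rewrite -hFq hlam; apply/rootP.
  by rewrite !hlam; apply: hdist.
have hND : d%:R = (m.+2)%:R * D%:R :> R by rewrite /d natrM.
have hDd : D%:R <= d%:R :> R.
  by rewrite ler_nat /d leq_pmull.
have hDdel : D%:R * del <= 4^-1.
  by rewrite -hdd ler_pM2r.
have h3e : 3 < D%:R * eps by rewrite mulrC -ltr_pdivrMr.
split.
  move=> i.
  have hi2 : (i < m.+2)%N by apply: (leq_trans (ltn_ord i)); apply: leqW.
  rewrite hlam inordK // /lamf (ltn_ord i).
  set j := (inord i : 'I_(m.+1)).
  have hj : (j : nat) = i by rewrite /j (inordK (ltnW (ltn_ord i))).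
  have [/andP[a1 a2] _] := hrho j.
  rewrite hj in a1 a2.
  have hmu : mu' i = mu i by rewrite /mu' valK.
  have f1 := floor_le_tmp (mu' i * D%:R).
  have f2 := lt_succ_floor (mu' i * D%:R).
  rewrite rmorphD /= hmu in f2; rewrite hmu in f1.
  have hk : d%:R * r i = (m.+2)%:R * (z i)%:~R + (i.+1)%:R.
    by rewrite hkd /kk (ltn_ord i) rmorphD rmorphM.
  rewrite hND /z hmu in hk.
  have hi1 : (1 : R) <= (i.+1)%:R by rewrite ler1n.
  have hiN : (i.+1)%:R + 1 <= (m.+2)%:R :> R.
    by rewrite natr1 ler_nat !ltnS; exact: ltnW.
  have hN : (0 : R) < (m.+2)%:R by [].
  set zr := (Num.Def.floor (mu i * D%:R))%:~R in f1 f2 hk.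
  have hA : 0 < D%:R * r i - zr.
    rewrite -(pmulr_rgt0 _ hN); nra.
  have hB : D%:R * r i - zr < 1.
    rewrite -(ltr_pM2l hN); nra.
  have e1 : D%:R * (rho j - r i) < D%:R * del by rewrite ltr_pM2l //; lra.
  have e2 : D%:R * (r i - rho j) < D%:R * del by rewrite ltr_pM2l //; lra.
  rewrite ltr_norml; apply/andP; split.
    rewrite -(ltr_pM2l hD0); lra.
  rewrite -(ltr_pM2l hD0); lra.
split.
  rewrite hlam inordK // /lamf ltnn eqxx gtr0_norm.
    have : 0 <= \sum_(j < m.+1) `|r j| by apply: sumr_ge0.
    rewrite /t in hrbt; lra.
  have : 0 <= \sum_(j < m.+1) `|r j| by apply: sumr_ge0.
  rewrite /t in hrbt; lra.
rewrite hlam inordK // /lamf ltnNge leqnSn /=.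
have -> : (m.+1 == m) = false by rewrite gtn_eqF.
have [/andP[a1 a2] _] := hrho (inord m).
have hr0 : r (inord m : 'I_(m.+1)) = 0 by rewrite /r inordK // /kk ltnn mul0r.
rewrite hr0 in a1 a2.
rewrite ltr_norml; apply/andP; split; nra.
Qed.
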